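(* Let $V^{(t+1)}=V^{(t)}-\alpha_t\nabla L_t$ with $\alpha_t>0$. If $\alpha_tL_t\le\frac{1}{30p}$, then \[ L_{t+1}\le L_t-\frac{5\alpha_t\lVert\nabla L_t\rVert^2}{6}. \]
   Context: Standing assumption: $h=1/p$ with $p\ge1$. Huberized ReLU: $\phi(z)=0$ for $z<0$, $z^2/(2h)$ for $z\in[0,h]$, $z-h/2$ for $z>h$. Data $(x_1,y_1),\ldots,(x_n,y_n)$ with $x_s\in\mathbb{R}^{d+1}$, $\lVert x_s\rVert=1$, $y_s\in\{-1,1\}$. For $V\in\mathbb{R}^{2p\times(d+1)}$ with rows $v_1,\ldots,v_{2p}$ and fixed $u_1=\cdots=u_p=1$, $u_{p+1}=\cdots=u_{2p}=-1$: $f_V(x)=\sum_{i=1}^{2p}u_i\phi(v_i\cdot x)$, $L(V)=\frac1n\sum_s\ln(1+\exp(-y_sf_V(x_s)))$. $L_t=L(V^{(t)})$, $\nabla L_t=\nabla_VL|_{V=V^{(t)}}$, and $\lVert\cdot\rVert$ is the Frobenius norm. *)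

(* Defs.v *)
From HB Require Import structures.
From mathcomp Require Import all_boot all_order all_algebra.
From mathcomp Require Import all_classical all_reals all_analysis.
Set Implicit Arguments. Unset Strict Implicit. Unset Printing Implicit Defensive.
Import Order.TTheory GRing.Theory Num.Theory.
Local Open Scope ring_scope.

Section Defs.
Variable R : realType.

Definition hrelu (h z : R) : R :=
  if z < 0 then 0 else if z <= h then z ^+ 2 / (2 * h) else z - h / 2.

Definition uw (p : nat) (i : 'I_(p + p)) : R := if (i < p)%N then 1 else -1.

Definition rowdot (p d : nat) (V : 'M[R]_(p + p, d.+1)) (i : 'I_(p + p))
  (x : 'rV[R]_(d.+1)) : R := \sum_(j < d.+1) V i j * x 0 j.

Definition fnet (p d : nat) (V : 'M[R]_(p + p, d.+1)) (x : 'rV[R]_(d.+1)) : R :=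
  \sum_(i < p + p) uw i * hrelu (p%:R)^-1 (rowdot V i x).

Definition loss (p d n : nat) (x : 'I_n -> 'rV[R]_(d.+1)) (y : 'I_n -> R)
  (V : 'M[R]_(p + p, d.+1)) : R :=
  (n%:R)^-1 * \sum_(s < n) ln (1 + expR (- (y s * fnet V (x s)))).

Definition gradM (m k : nat) (F : 'M[R]_(m, k) -> R) (V : 'M[R]_(m, k))
  : 'M[R]_(m, k) :=
  \matrix_(i < m, j < k) derive1 (fun t : R => F (V + t *: delta_mx i j)) 0.

Definition frob2 (m k : nat) (A : 'M[R]_(m, k)) : R :=
  \sum_(i < m) \sum_(j < k) A i j ^+ 2.

End Defs.

(* Main.v *)
Require Import Defs.
From HB Require Import structures.
From mathcomp Require Import all_boot all_order all_algebra.
From mathcomp Require Import all_classical all_reals all_analysis.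
From mathcomp Require Import ring lra.
Import Order.TTheory GRing.Theory Num.Theory numFieldNormedType.Exports.
Local Open Scope ring_scope.
Local Open Scope classical_set_scope.

Lemma quad_cvg (R : realType) (f : R -> R) (a D K : R) :
  (forall s, `|f (a + s) - f a - D * s| <= K * s ^+ 2) ->
  (fun h : R => h^-1 * (f (a + h) - f a)) @ (0:R)^' --> D.
Proof.
move=> H.
apply/cvgrPdist_lt => e e0.
have K1 : 0 < `|K| + 1 by rewrite ltr_pwDr// normr_ge0.
near=> t.
have t0 : t != 0 by near: t; exact: nbhs_dnbhs_neq.
have tsmall : `|t| < e / (`|K| + 1).
  near: t; apply: dnbhs0_lt; exact: divr_gt0.
have Hb := H t.
have -> : D - t^-1 * (f (a + t) - f a) = - (t^-1 * (f (a + t) - f a - D * t)).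
  by field.
rewrite normrN normrM normfV.
set n := `|_ - _ - _|  in Hb *.
have u0 : 0 < `|t| by rewrite normr_gt0.
rewrite -(real_normK (num_real t)) in Hb.
have h1 : `|t|^-1 * n <= `|t|^-1 * (K * `|t| ^+ 2) by rewrite ler_wpM2l// invr_ge0 ltW.
have h2 : `|t|^-1 * (K * `|t| ^+ 2) = K * `|t| by field; rewrite gt_eqF.
have h3 : `|t| * (`|K| + 1) < e by rewrite -ltr_pdivlMr.
have h4 : K <= `|K| := ler_norm K.
nra.
Unshelve. all: by end_near.
Qed.

Lemma quad_is_derive (R : realType) (f : R -> R) (a D K : R) :
  (forall s, `|f (a + s) - f a - D * s| <= K * s ^+ 2) ->
  is_derive a 1 f D.
Proof.
move=> /quad_cvg cv.
have eqf : (fun h : R => h^-1 *: ((f \o shift a) (h *: 1) - f a)) = (fun h : R => h^-1 * (f (a + h) - f a)).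
  by apply/funext => h /=; rewrite /shift /= -[h%:A]/(h * 1) mulr1 (addrC h a).
split; first by apply/cvg_ex; exists D; rewrite /= eqf.
by rewrite /derive eqf; exact: cvg_lim cv.
Qed.
Definition hder {R : realType} (h z : R) : R :=
  if z < 0 then 0 else if z <= h then z / h else 1.

Lemma hrelu_rem (R : realType) (h a s : R) : 0 < h ->
  0 <= hrelu h (a + s) - hrelu h a - hder h a * s <= s ^+ 2 / (2 * h).
Proof.
move=> h0.
have e1 z : hrelu h z = (if z < 0 then 0 else if z <= h then z ^+ 2 else 2 * h * z - h ^+ 2) / (2 * h).
  rewrite /hrelu; case: ifP => _; first by rewrite mul0r.
  case: ifP => _ //; field; lra.
have e2 z : hder h z = (if z < 0 then 0 else if z <= h then 2 * z else 2 * h) / (2 * h).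
  rewrite /hder; case: ifP => _; first by rewrite mul0r.
  case: ifP => _; field; lra.
rewrite !e1 e2.
set A := (if a + s < 0 then _ else _); set B := (if a < 0 then _ else _).
set C := (if a < 0 then 0 else _).
have k0 : 0 < (2 * h)^-1 by rewrite invr_gt0; lra.
suff /andP[H1 H2] : 0 <= A - B - C * s <= s ^+ 2.
  apply/andP; split; rewrite -!mulrBl.
    rewrite mulrAC -mulrBl; exact: mulr_ge0 H1 (ltW k0).
  rewrite mulrAC -mulrBl; by rewrite ler_pM2r.
rewrite {}/A {}/B {}/C.
case: (ltP (a + s) 0) => H1; case: (leP (a + s) h) => H2;
case: (ltP a 0) => H3; case: (leP a h) => H4; apply/andP; split; nra.
Qed.
Section D.
Variable R : realType.

Lemma drv_ext (f g : R -> R) (x d : R) : f = g -> is_derive x (1:R) f d -> is_derive x (1:R) g d.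
Proof. by move=> ->. Qed.

Lemma drv_sum m (f : 'I_m -> R -> R) (d : 'I_m -> R) (x : R) :
  (forall k, is_derive x (1:R) (f k) (d k)) ->
  is_derive x (1:R) (fun t => \sum_(k < m) f k t) (\sum_(k < m) d k).
Proof.
move=> H; have := is_derive_sum H.
apply: drv_ext.
by apply/funext => t; rewrite fct_sumE.
Qed.

Lemma drv_mulc (f : R -> R) (c d x : R) :
  is_derive x (1:R) f d -> is_derive x (1:R) (fun t => c * f t) (c * d).
Proof. move=> H; exact: (is_deriveZ c H). Qed.

Lemma drv_comp (f g : R -> R) (a b x : R) :
  is_derive (g x) (1:R) f a -> is_derive x (1:R) g b ->
  is_derive x (1:R) (fun t => f (g t)) (a * b).
Proof. move=> H1 H2; exact: (is_derive1_comp H1 H2). Qed.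


Lemma drv_addc (f : R -> R) (c d x : R) :
  is_derive x (1:R) f d -> is_derive x (1:R) (fun t => c + f t) d.
Proof.
move=> H; have := is_deriveD (is_derive_cst c x 1) H; rewrite add0r.
by apply: drv_ext; apply/funext.
Qed.

Lemma phi_drv (hh a c : R) : 0 < hh ->
  is_derive (0:R) (1:R) (fun t => hrelu hh (a + t * c)) (hder hh a * c).
Proof.
move=> h0; apply: (@quad_is_derive _ _ _ _ (c ^+ 2 / (2 * hh))) => s.
rewrite add0r mul0r addr0.
have /andP[H1 H2] := @hrelu_rem R hh a (s * c) h0.
rewrite -[hder hh a * c * s]mulrA [c * s]mulrC ger0_norm //.
apply: (le_trans H2); rewrite exprMn le_eqVlt; apply/orP; left; apply/eqP; field; lra.
Qed.

Lemma rowdot_upd p d (V : 'M[R]_(p + p, d.+1)) i j k xx t :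
  rowdot (V + t *: delta_mx i j) k xx = rowdot V k xx + t * ((i == k)%:R * xx 0 j).
Proof.
rewrite /rowdot.
under eq_bigr do rewrite !mxE mulrDl.
rewrite big_split /=; congr (_ + _).
rewrite (bigD1 j) //= big1 ?addr0; last first.
  by move=> l /negbTE jl; rewrite eq_sym jl andbF mulr0 mul0r.
by rewrite eqxx andbT mulrA eq_sym.
Qed.

End D.
Arguments drv_ext {R}. Arguments drv_sum {R m f d x}. Arguments drv_mulc {R f} c {d x}. Arguments drv_comp {R f g a b x}.
Arguments drv_addc {R f} c {d x}. Arguments phi_drv {R hh}. Arguments rowdot_upd {R p d}.

Section G.
Variable R : realType.
Definition gg {p d n} (x : 'I_n -> 'rV[R]_(d.+1)) (y : 'I_n -> R) (V : 'M[R]_(p + p, d.+1)) s :=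
  expR (- (y s * fnet V (x s))) / (1 + expR (- (y s * fnet V (x s)))).

Lemma gradE p d n (x : 'I_n -> 'rV[R]_(d.+1)) (y : 'I_n -> R) (V : 'M[R]_(p + p, d.+1)) i j :
  (1 <= p)%N ->
  gradM (loss x y) V i j = - ((n%:R)^-1 * \sum_(s < n) gg x y V s * y s * uw R i
     * hder (p%:R)^-1 (rowdot V i (x s)) * x s 0 j).
Proof.
move=> hp.
have hh0 : 0 < (p%:R : R)^-1 by rewrite invr_gt0 ltr0n.
set hh := (p%:R : R)^-1 in hh0 *.
rewrite /gradM mxE derive1E.
have E : (fun t => loss x y (V + t *: delta_mx i j)) = (fun t => (n%:R)^-1 * \sum_(s < n)
   ln (1 + expR (- y s * \sum_(k < p + p) uw R k * hrelu hh (rowdot V k (x s) + t * ((i == k)%:R * x s 0 j))))).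
  apply/funext => t; rewrite /loss /fnet; congr (_ * _); apply: eq_bigr => s _.
  by rewrite mulNr; under eq_bigr do rewrite rowdot_upd.
rewrite E.
have D : forall s, is_derive (0:R) (1:R) (fun t => ln (1 + expR (- y s * \sum_(k < p + p) uw R k * hrelu hh (rowdot V k (x s) + t * ((i == k)%:R * x s 0 j))))) (gg x y V s * - y s * (uw R i * hder hh (rowdot V i (x s)) * x s 0 j)).
  move=> s.
  have h1 := fun k : 'I_(p + p) => drv_mulc (uw R k) (phi_drv (rowdot V k (x s)) ((i == k)%:R * x s 0 j) hh0).
  have h2 := drv_mulc (- y s) (drv_sum h1).
  have h3 := drv_addc 1 (drv_comp (is_derive_expR _) h2).
  have h4 := drv_comp (is_derive1_ln _) h3.
  apply: (is_derive_eq (h4 (addr_gt0 ltr01 (expR_gt0 _)))).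
  have F : \sum_(k < p + p) uw R k * hrelu hh (rowdot V k (x s) + 0 * ((i == k)%:R * x s 0 j)) = fnet V (x s).
    by rewrite /fnet; apply: eq_bigr => k _; rewrite mul0r addr0.
  rewrite F (bigD1 i) //= big1 ?addr0; last first.
    by move=> k /negbTE ki; rewrite eq_sym ki mul0r mulr0 mulr0.
  rewrite eqxx /gg mulNr mul1r; field.
  by rewrite gt_eqF // addr_gt0 // ?ltr01 // expR_gt0.
have D2 := drv_mulc ((n%:R : R)^-1) (drv_sum D).
have [_ ->] := D2.
rewrite -mulrN -sumrN; congr (_ * _); apply: eq_bigr => s _; ring.
Qed.
End G.
Arguments gg {R p d n}. Arguments gradE {R p d n}.
Section CS.
Variable R : realType.

Lemma sum_mul_sum m (X Y : 'I_m -> R) :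
  (\sum_k X k) * (\sum_l Y l) = \sum_k \sum_l X k * Y l.
Proof. by rewrite mulr_suml; apply: eq_bigr => k _; rewrite mulr_sumr. Qed.

Lemma wCS m (w a b : 'I_m -> R) : (forall k, 0 <= w k) ->
  (\sum_k w k * a k * b k) ^+ 2 <= (\sum_k w k * a k ^+ 2) * (\sum_k w k * b k ^+ 2).
Proof.
move=> w0.
have H : 0 <= \sum_k \sum_l w k * w l * (a k * b l - a l * b k) ^+ 2.
  apply: sumr_ge0 => k _; apply: sumr_ge0 => l _.
  by apply: mulr_ge0; [apply: mulr_ge0|apply: sqr_ge0].
have E : \sum_k \sum_l w k * w l * (a k * b l - a l * b k) ^+ 2 =
  (\sum_k w k * a k ^+ 2) * (\sum_k w k * b k ^+ 2) + (\sum_k w k * b k ^+ 2) * (\sum_k w k * a k ^+ 2)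
  - 2 * ((\sum_k w k * a k * b k) * (\sum_k w k * a k * b k)).
  rewrite !sum_mul_sum mulr_sumr -!big_split /= -sumrB; apply: eq_bigr => k _.
  rewrite mulr_sumr -!big_split /= -sumrB; apply: eq_bigr => l _.
  ring.
move: H; rewrite E (mulrC (\sum_k w k * b k ^+ 2)) => H; nra.
Qed.

Lemma CS m (a b : 'I_m -> R) :
  (\sum_k a k * b k) ^+ 2 <= (\sum_k a k ^+ 2) * (\sum_k b k ^+ 2).
Proof.
have := @wCS m (fun _ => 1) a b (fun _ => ler01).
have E1 : \sum_k 1 * a k * b k = \sum_k a k * b k by apply: eq_bigr => k _; rewrite mul1r.
have E2 : \sum_k 1 * a k ^+ 2 = \sum_k a k ^+ 2 by apply: eq_bigr => k _; rewrite mul1r.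
have E3 : \sum_k 1 * b k ^+ 2 = \sum_k b k ^+ 2 by apply: eq_bigr => k _; rewrite mul1r.
by rewrite E1 E2 E3.
Qed.
End CS.
Arguments CS {R m}.
Arguments wCS {R m}. Arguments sum_mul_sum {R m}.
Section L.
Variable R : realType.

Lemma expR_up (x : R) : x <= 10^-1 -> expR x <= 1 + x + 10 / 9 * x ^+ 2.
Proof.
move=> hx.
have h1 := expR_ge1Dx (- x).
have h2 : expR x * expR (- x) = 1 by rewrite -expRD subrr expR0.
have h3 : 0 < expR x := expR_gt0 x.
have hx' : x * 10 <= 1.
  by rewrite -ler_pdivlMr ?mul1r //; lra.
nra.
Qed.

Lemma logi (z e : R) : - e <= 10^-1 ->
  ln (1 + expR (- (z + e))) <= ln (1 + expR (- z))
    - expR (- z) / (1 + expR (- z)) * e + 10 / 9 * (expR (- z) / (1 + expR (- z))) * e ^+ 2.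
Proof.
move=> he.
set u := expR (- z).
have u0 : 0 < u := expR_gt0 _.
set q := u / (1 + u).
have q0 : 0 < q by rewrite divr_gt0 // addr_gt0.
have q1 : q < 1 by rewrite ltr_pdivrMr ?addr_gt0 //; lra.
have w0 : 0 < expR (- e) := expR_gt0 _.
have hw := @expR_up (- e) he.
have E : 1 + expR (- (z + e)) = (1 + u) * (1 + q * (expR (- e) - 1)).
  rewrite opprD expRD /q /u; field; rewrite gt_eqF // addr_gt0 // expR_gt0.
rewrite E lnM ?posrE; last 2 first.
- by rewrite addr_gt0.
- nra.
have := @le_ln1Dx _ (q * (expR (- e) - 1)) ltac:(nra).
nra.
Qed.
End L.
Arguments logi {R}. Arguments expR_up {R}.

Section M.
Variable R : realType.

Lemma g_le_ln (u : R) : 0 < u -> u / (1 + u) <= ln (1 + u).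
Proof.
move=> u0.
have h1 : -1 < - (u / (1 + u)).
  rewrite ltrNl opprK ltr_pdivrMr ?addr_gt0 //; lra.
have := le_ln1Dx h1.
have -> : 1 - u / (1 + u) = (1 + u)^-1 by field; lra.
rewrite lnV ?posrE ?addr_gt0 //; lra.
Qed.

Lemma hder_01 (hh z : R) : 0 < hh -> 0 <= hder hh z <= 1.
Proof.
move=> h0; rewrite /hder; case: (ltP z 0) => H0; first by rewrite lexx ler01.
case: (leP z hh) => H; last by rewrite ler01 lexx.
apply/andP; split; first by rewrite divr_ge0 // ltW.
by rewrite ler_pdivrMr // mul1r.
Qed.

Lemma uw_sq p (i : 'I_(p + p)) : uw R i ^+ 2 = 1.
Proof. by rewrite /uw; case: ifP => _; rewrite ?sqrrN expr1n. Qed.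

End M.
Arguments g_le_ln {R}. Arguments hder_01 {R}. Arguments uw_sq {R p}.

Local Close Scope classical_set_scope.

Theorem lemma4 (R : realType) (p d n : nat) (hp : (1 <= p)%N) (hn : (0 < n)%N)
  (x : 'I_n -> 'rV[R]_(d.+1)) (y : 'I_n -> R)
  (hx : forall s, \sum_(j < d.+1) (x s 0 j) ^+ 2 = 1)
  (hy : forall s, y s = 1 \/ y s = -1)
  (V : 'M[R]_(p + p, d.+1)) (alpha : R) (halpha : 0 < alpha)
  (hstep : alpha * loss x y V <= ((30 * p)%:R)^-1) :
  loss x y (V - alpha *: gradM (loss x y) V)
    <= loss x y V - 5 * alpha * frob2 (gradM (loss x y) V) / 6.
Proof.
set G := gradM (loss x y) V.
set P : R := p%:R.
have P1 : 1 <= P by rewrite /P ler1n.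
set hh : R := P^-1.
have hh0 : 0 < hh by rewrite invr_gt0; lra.
have PH : P * hh = 1 by rewrite /hh mulfV //; lra.
set N : R := n%:R.
have N0 : 0 < N by rewrite /N ltr0n.
set a := fun i s => rowdot V i (x s).
set g := fun s => gg x y V s.
set z := fun s => y s * fnet V (x s).
set l := fun s => ln (1 + expR (- z s)).
set L := loss x y V.
have LE : L = N^-1 * \sum_s l s by [].
have gE s : g s = expR (- z s) / (1 + expR (- z s)) by [].
have g0 s : 0 <= g s by rewrite gE divr_ge0 // ?addr_ge0 // ltW // expR_gt0.
have gl s : g s <= l s by rewrite gE g_le_ln // expR_gt0.
have y2 s : y s ^+ 2 = 1 by case: (hy s) => ->; rewrite ?sqrrN expr1n.
set c := fun s i => g s * y s * uw R i * hder hh (a i s).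
have GE i j : G i j = - (N^-1 * \sum_s c s i * x s 0 j).
  by rewrite /G gradE.
set D := frob2 G.
have D0 : 0 <= D by apply: sumr_ge0 => i _; apply: sumr_ge0 => j _; exact: sqr_ge0.
have L0 : 0 <= L.
  rewrite LE; apply: mulr_ge0; first by rewrite invr_ge0 ltW.
  apply: sumr_ge0 => s _; exact: le_trans (g0 s) (gl s).
have tB : P * alpha * L <= 30^-1.
  have e : ((30 * p)%:R : R)^-1 = 30^-1 * hh by rewrite natrM invfM.
  rewrite e in hstep.
  have := ler_wpM2l (ltW (lt_le_trans ltr01 P1)) hstep.
  by rewrite mulrA [P * (_ * _)]mulrCA PH mulr1.
set t := P * alpha * L.
have t0 : 0 <= t by rewrite /t; apply: mulr_ge0 => //; apply: mulr_ge0; lra.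
set V' := V - alpha *: G.
set del := fun i s => - alpha * \sum_j G i j * x s 0 j.
have rowV' i s : rowdot V' i (x s) = a i s + del i s.
  rewrite /rowdot /a /del mulr_sumr -big_split /=; apply: eq_bigr => j _.
  rewrite !mxE; ring.
have hdel s : \sum_i del i s ^+ 2 <= alpha ^+ 2 * D.
  rewrite /D /frob2 mulr_sumr; apply: ler_sum => i _.
  rewrite /del exprMn sqrrN ler_wpM2l ?sqr_ge0 //.
  by have := CS (fun j => G i j) (fun j => x s 0 j); rewrite hx mulr1.
have hd01 i s : 0 <= hder hh (a i s) <= 1 := hder_01 _ _ hh0.
set A := fun s => y s * \sum_i uw R i * hder hh (a i s) * del i s.
have hA s : A s ^+ 2 <= 2 * P * (alpha ^+ 2 * D).
  rewrite /A exprMn y2 mul1r.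
  have := CS (fun i => uw R i * hder hh (a i s)) (fun i => del i s).
  move/le_trans; apply.
  apply: ler_pM => //; first by apply: sumr_ge0 => i _; exact: sqr_ge0.
    by apply: sumr_ge0 => i _; exact: sqr_ge0.
  have -> : 2 * P = \sum_(i < p + p) (1 : R).
    by rewrite sumr_const card_ord /P natrD; ring.
  apply: ler_sum => i _; rewrite exprMn uw_sq mul1r.
  have /andP[h1 h2] := hd01 i s; nra.
set r := fun i s => hrelu hh (a i s + del i s) - hrelu hh (a i s) - hder hh (a i s) * del i s.
have hr i s : 0 <= r i s <= P / 2 * del i s ^+ 2.
  have /andP[h1 h2] := @hrelu_rem R hh (a i s) (del i s) hh0.
  rewrite /r h1 /=; apply: (le_trans h2); rewrite le_eqVlt; apply/orP; left; apply/eqP.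
  rewrite /hh; field; lra.
set B := fun s => y s * \sum_i uw R i * r i s.
have hB s : `|B s| <= P / 2 * (alpha ^+ 2 * D).
  rewrite /B normrM.
  have -> : `|y s| = 1 by case: (hy s) => ->; rewrite ?normrN normr1.
  rewrite mul1r; apply: (le_trans (ler_norm_sum _ _ _)).
  apply: le_trans (_ : \sum_i P / 2 * del i s ^+ 2 <= _); last first.
    by rewrite -mulr_sumr ler_wpM2l ?hdel //; lra.
  apply: ler_sum => i _; rewrite normrM.
  have -> : `|uw R i| = 1 by rewrite /uw; case: ifP => _; rewrite ?normrN normr1.
  have /andP[h1 h2] := hr i s.
  by rewrite mul1r ger0_norm.
have he s : y s * fnet V' (x s) = z s + (A s + B s).
  rewrite /z /A /B -!mulrDr; congr (_ * _).
  rewrite /fnet -!big_split /=; apply: eq_bigr => i _.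
  rewrite rowV' /r /a; ring.
have SE i j : \sum_s c s i * x s 0 j = - N * G i j.
  rewrite GE; field; lra.
have hlin : \sum_s g s * A s = N * alpha * D.
  have E1 s : g s * A s = \sum_i \sum_j (- alpha) * G i j * (c s i * x s 0 j).
    have -> : g s * A s = \sum_i (g s * y s * uw R i * hder hh (a i s) * (- alpha)) * \sum_j G i j * x s 0 j.
      rewrite /A mulrA mulr_sumr; apply: eq_bigr => i _; rewrite /del; ring.
    apply: eq_bigr => i _; rewrite mulr_sumr; apply: eq_bigr => j _; rewrite /c; ring.
  rewrite (eq_bigr _ (fun s _ => E1 s)) exchange_big /=.
  rewrite /D /frob2 mulr_sumr; apply: eq_bigr => i _.
  rewrite exchange_big /= mulr_sumr; apply: eq_bigr => j _.
  rewrite -mulr_sumr SE; ring.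
set Sg := \sum_s g s.
have Sg0 : 0 <= Sg by apply: sumr_ge0 => s _.
have SgL : Sg <= N * L.
  rewrite LE mulrA mulfV ?mul1r; last by rewrite gt_eqF.
  by apply: ler_sum => s _.
set b := fun i s j => uw R i * hder hh (a i s) * x s 0 j.
have hG i j : G i j ^+ 2 <= N^-1 ^+ 2 * (Sg * \sum_s g s * b i s j ^+ 2).
  rewrite GE sqrrN exprMn; apply: ler_wpM2l; first exact: sqr_ge0.
  have -> : \sum_s c s i * x s 0 j = \sum_s g s * y s * b i s j.
    by apply: eq_bigr => s _; rewrite /c /b; ring.
  apply: le_trans (wCS g y (fun s => b i s j) g0) _.
  have -> : \sum_s g s * y s ^+ 2 = Sg by apply: eq_bigr => s _; rewrite y2 mulr1.
  done.
have hW : \sum_i \sum_j \sum_s g s * b i s j ^+ 2 <= 2 * P * Sg.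
  rewrite (eq_bigr (fun i => \sum_s \sum_j g s * b i s j ^+ 2)); last by move=> i _; rewrite exchange_big.
  rewrite exchange_big /= /Sg mulr_sumr; apply: ler_sum => s _.
  have E2 i : \sum_j g s * b i s j ^+ 2 = g s * hder hh (a i s) ^+ 2.
    rewrite (eq_bigr (fun j => g s * hder hh (a i s) ^+ 2 * x s 0 j ^+ 2)); last first.
      by move=> j _; rewrite /b !exprMn uw_sq; ring.
    by rewrite -mulr_sumr hx mulr1.
  rewrite (eq_bigr _ (fun i _ => E2 i)).
  have -> : 2 * P * g s = \sum_(i < p + p) g s.
    by rewrite sumr_const card_ord /P mulrnDr -mulr_natr; ring.
  apply: ler_sum => i _.
  have /andP[h1 h2] := hd01 i s.
  have h3 : hder hh (a i s) ^+ 2 <= 1 by nra.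
  by rewrite -[X in _ <= X]mulr1 ler_wpM2l.
have hD : D <= 2 * P * L ^+ 2.
  have H1 : D <= N^-1 ^+ 2 * (Sg * (2 * P * Sg)).
    rewrite /D /frob2.
    apply: le_trans (_ : \sum_i \sum_j N^-1 ^+ 2 * (Sg * \sum_s g s * b i s j ^+ 2) <= _).
      by apply: ler_sum => i _; apply: ler_sum => j _; exact: hG.
    rewrite (eq_bigr (fun i => N^-1 ^+ 2 * (Sg * \sum_j \sum_s g s * b i s j ^+ 2))); last first.
      by move=> i _; rewrite -!mulr_sumr.
    rewrite -!mulr_sumr.
    by rewrite ler_wpM2l ?sqr_ge0 // ler_wpM2l.
  have u0 : 0 <= N^-1 * Sg by rewrite mulr_ge0 // invr_ge0 ltW.
  have uL : N^-1 * Sg <= L.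
    by rewrite ler_pdivrMl //.
  apply: (le_trans H1).
  have -> : N^-1 ^+ 2 * (Sg * (2 * P * Sg)) = 2 * P * (N^-1 * Sg) ^+ 2 by ring.
  apply: ler_wpM2l; first lra.
  by rewrite lerXn2r // ?nnegrE // (le_trans u0).
set Q := P * (alpha ^+ 2 * D).
have Q0 : 0 <= Q by rewrite /Q mulr_ge0 ?mulr_ge0 ?sqr_ge0 //; lra.
have hQ : Q <= 2 * t ^+ 2.
  have : Q <= P * (alpha ^+ 2 * (2 * P * L ^+ 2)).
    by rewrite /Q ler_wpM2l ?ler_wpM2l ?sqr_ge0 //; lra.
  by move/le_trans; apply; rewrite /t le_eqVlt; apply/orP; left; apply/eqP; ring.
set K := 4 * Q + Q ^+ 2 / 2.
set M := Q / 2 + 10 / 9 * K.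
have hAB s : - (A s + B s) <= 10^-1 /\ (A s + B s) ^+ 2 <= K /\ - (g s * B s) <= g s * (Q / 2).
  have a1 := hA s; have b1 := hB s.
  have b2 : `|B s| <= Q / 2.
    by apply: (le_trans b1); rewrite /Q le_eqVlt; apply/orP; left; apply/eqP; ring.
  have b3 : B s <= `|B s| := ler_norm _.
  have b4 : - B s <= `|B s| by rewrite -normrN ler_norm.
  have b5 : B s ^+ 2 = `|B s| ^+ 2 by rewrite real_normK // num_real.
  have b6 : 0 <= `|B s| := normr_ge0 _.
  have t1 : t <= 30^-1 := tB.
  have gs0 := g0 s.
  split; last split.
  - have a2 : A s ^+ 2 <= 2 * Q by rewrite /Q; lra.
    have tt : t ^+ 2 <= 1 / 900 by nra.
    have a3 : A s ^+ 2 <= 4 / 900 by lra.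
    have a4 : - A s <= 1 / 15 by nra.
    have : `|B s| <= 1 / 900 by lra.
    lra.
  - have a2 : A s ^+ 2 <= 2 * Q by rewrite /Q; lra.
    have b7 : `|B s| ^+ 2 <= (Q / 2) ^+ 2 by rewrite lerXn2r // ?nnegrE //; lra.
    have c1 : (A s + B s) ^+ 2 <= 2 * A s ^+ 2 + 2 * B s ^+ 2.
      have := sqr_ge0 (A s - B s); lra.
    rewrite /K; lra.
  - nra.
have step1 : loss x y V' <= N^-1 * \sum_s (l s - g s * A s + g s * M).
  rewrite /loss -/N; apply: ler_wpM2l; first by rewrite invr_ge0 ltW.
  apply: ler_sum => s _.
  have [h1 [h2 h3]] := hAB s.
  rewrite he.
  have := logi (z s) (A s + B s) h1.
  rewrite -gE -/(l s) => H.
  apply: (le_trans H).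
  have gs0 := g0 s.
  have : g s * (A s + B s) ^+ 2 <= g s * K by apply: ler_wpM2l.
  rewrite /M; lra.
have E2 : \sum_s (l s - g s * A s + g s * M) = \sum_s l s - \sum_s g s * A s + Sg * M.
  by rewrite big_split sumrB /= -mulr_suml.
rewrite E2 hlin in step1.
have E3 : N^-1 * (\sum_s l s - N * alpha * D + Sg * M) = L - alpha * D + (N^-1 * Sg) * M.
  rewrite LE; field; lra.
rewrite E3 in step1.
apply: (le_trans step1).
have u0 : 0 <= N^-1 * Sg by rewrite mulr_ge0 // invr_ge0 ltW.
have uL : N^-1 * Sg <= L by rewrite ler_pdivrMl //.
have M0 : 0 <= M by rewrite /M /K; nra.
have h1 : (N^-1 * Sg) * M <= L * M by apply: ler_wpM2r.
have X0 : 0 <= alpha * D by rewrite mulr_ge0 // ltW.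
have LQ : L * Q = t * (alpha * D) by rewrite /Q /t; ring.
have t1 : t <= 30^-1 := tB.
have h2 : L * (Q ^+ 2) <= t * (alpha * D) * (2 * t ^+ 2).
  have -> : L * Q ^+ 2 = t * (alpha * D) * Q by rewrite -LQ; ring.
  by apply: ler_wpM2l => //; apply: mulr_ge0.
have h3 : t * (alpha * D) * (2 * t ^+ 2) <= t * (alpha * D) * (2 / 900).
  apply: ler_wpM2l; first exact: mulr_ge0.
  nra.
have LM : L * M = t * (alpha * D) / 2 + 10 / 9 * (4 * (t * (alpha * D)) + L * Q ^+ 2 / 2).
  by rewrite /M /K -LQ; ring.
have h4 : t * (alpha * D) <= 30^-1 * (alpha * D) by apply: ler_wpM2r.
lra.
Qed.
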